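(* Let $H$ be a $3$-uniform hypergraph on $8$ vertices not containing a Fano plane. If $H$ contains the complete $3$-uniform hypergraph $K_6^{(3)}$ on $6$ vertices, then $e(H)\le 46<b(8)$, where $b(8)=48$.
   Context: $e(H)$ is the number of edges. ''Containing'' means having a (not necessarily induced) subhypergraph isomorphic to it. The Fano plane is the hypergraph on vertex set $\{1,\dots,7\}$ with edges $123,345,156,147,367,257,246$. $b(n)=\frac{n-2}{2}\lfloor n^2/4\rfloor$ is the number of edges of the balanced complete bipartite $3$-uniform hypergraph on $n$ vertices. *)

(* Defs.v *)
From mathcomp Require Import all_boot.
Set Implicit Arguments. Unset Strict Implicit. Unset Printing Implicit Defensive.

Definition uniform3 (T : finType) (H : {set {set T}}) : Prop :=
  forall e, e \in H -> #|e| = 3.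

Definition nedges (T : finType) (H : {set {set T}}) : nat := #|H|.

(* Fano plane on vertices {0..6} (paper's 1..7 shifted by one):
   edges 123,345,156,147,367,257,246. *)
Definition fano_edges : seq (nat * nat * nat) :=
  [:: (0,1,2); (2,3,4); (0,4,5); (0,3,6); (2,5,6); (1,4,6); (1,3,5)].

Definition contains_fano (T : finType) (H : {set {set T}}) : Prop :=
  exists f : 'I_7 -> T, injective f /\
    forall a b c, (a, b, c) \in fano_edges ->
      [set f (inord a); f (inord b); f (inord c)] \in H.

Definition contains_K63 (T : finType) (H : {set {set T}}) : Prop :=
  exists S : {set T}, #|S| = 6 /\
    forall e : {set T}, e \subset S -> #|e| = 3 -> e \in H.

(* b(n) = (n-2)/2 * floor(n^2/4); (n-2) * floor(n^2/4) is always even. *)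
Definition b (n : nat) : nat := ((n - 2) * (n ^ 2 %/ 4)) %/ 2.

(* Main.v *)
Require Import Defs.
From mathcomp Require Import all_boot zify.
Set Implicit Arguments. Unset Strict Implicit. Unset Printing Implicit Defensive.

Definition pairs6 : seq (nat * nat) :=
  [:: (0,1); (0,2); (0,3); (0,4); (0,5); (1,2); (1,3); (1,4); (1,5); (2,3); (2,4); (2,5); (3,4); (3,5); (4,5)].

Definition PMs : seq (nat*nat*nat*nat*nat*nat) :=
 [:: (0,1,2,3,4,5); (0,1,2,4,3,5); (0,1,2,5,3,4); (0,2,1,3,4,5); (0,2,1,4,3,5); (0,2,1,5,3,4); (0,3,1,2,4,5); (0,3,1,4,2,5); (0,3,1,5,2,4); (0,4,1,2,3,5); (0,4,1,3,2,5); (0,4,1,5,2,3); (0,5,1,2,3,4); (0,5,1,3,2,4); (0,5,1,4,2,3)].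

Definition pm_ok (g : nat -> nat -> bool) :=
  has (fun m : nat*nat*nat*nat*nat*nat => let: (a,b,c,d,e,f) := m in [&& g a b, g c d & g e f]) PMs.

Definition g_of (l : seq bool) i j := nth false l (index (i,j) pairs6).

Definition chk (l : seq bool) := pm_ok (g_of l) || (5 <= count negb l).

Fixpoint allb n (f : seq bool -> bool) : bool :=
  if n is n'.+1 then allb n' (fun l => f (true :: l)) && allb n' (fun l => f (false :: l))
  else f [::].

Lemma allbP n f : allb n f -> forall l, size l = n -> f l.
Proof.
elim: n f => [|n IH] f /=; first by move=> H [].
move=> /andP [H1 H2] [//|[] l] /= [Hl].
  exact: (IH _ H1).
exact: (IH _ H2).
Qed.

Lemma chk_all : allb 15 chk.
Proof. vm_compute. reflexivity. Qed.

Lemma card3 (T : finType) (a b c : T) : a != b -> a != c -> b != c -> #|[set a; b; c]| = 3.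
Proof.
move=> ab ac bc.
rewrite -setUA cardsU1 cards2 bc !inE negb_or ab ac.
by [].
Qed.

Lemma g_ofE (g : nat -> nat -> bool) i j : (i, j) \in pairs6 ->
  g_of [seq g p.1 p.2 | p <- pairs6] i j = g i j.
Proof.
move=> Hij; rewrite /g_of (nth_map (0,0)) ?index_mem // nth_index //.
Qed.

Lemma pm_facts : all (fun m : nat*nat*nat*nat*nat*nat => let: (a,b,c,d,e,f) := m in
  [&& (a,b) \in pairs6, (c,d) \in pairs6, (e,f) \in pairs6, uniq [:: a; b; e; c; d; f]
    & all (fun i => i < 6) [:: a; b; e; c; d; f]]) PMs.
Proof. by []. Qed.

Lemma pairs6_facts : uniq pairs6 /\ all (fun p => p.1 < p.2 < 6) pairs6.
Proof. by []. Qed.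

Lemma link_bound (T : finType) (H : {set {set T}}) (S : {set T}) (x : T) :
  #|S| = 6 -> (forall e : {set T}, e \subset S -> #|e| = 3 -> e \in H) -> x \notin S ->
  ~ contains_fano H ->
  exists s : seq {set T}, [/\ uniq s, 5 <= size s &
     forall e, e \in s -> [/\ #|e| = 3, e \notin H, x \in e & e :\ x \subset S]].
Proof.
move=> cS K6 xS nF.
pose tau i := nth x (enum S) i.
have sz : size (enum S) = 6 by rewrite -cardE.
have tauS i : i < 6 -> tau i \in S.
  by move=> Hi; rewrite -mem_enum mem_nth // sz.
have tau_inj i j : i < 6 -> j < 6 -> tau i = tau j -> i = j.
  move=> Hi Hj /eqP; rewrite /tau nth_uniq ?sz ?enum_uniq //; by move/eqP.
have tau_x i : i < 6 -> tau i != x.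
  by move=> Hi; apply/eqP => E; move: (tauS i Hi); rewrite E (negbTE xS).
pose g i j := [set x; tau i; tau j] \in H.
have := allbP chk_all (size_map (fun p => g p.1 p.2) pairs6).
case/orP => [Hpm | Hcnt]; last first.
  pose P := [seq p <- pairs6 | ~~ g p.1 p.2].
  have [uP all6] := pairs6_facts.
  have Pin p : p \in P -> p.1 < p.2 < 6.
    by rewrite mem_filter => /andP [_ Hp]; exact: (allP all6 _ Hp).
  exists [seq [set x; tau p.1; tau p.2] | p <- P]; split.
  - rewrite map_inj_in_uniq ?filter_uniq //.
    case=> [i j] [k l] /Pin /= /andP [ij j6] /Pin /= /andP [kl l6] E.
    have i6 : i < 6 by lia.
    have k6 : k < 6 by lia.
    have hi : tau i \in [set x; tau k; tau l] by rewrite -E !inE eqxx !orbT.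
    have hj : tau j \in [set x; tau k; tau l] by rewrite -E !inE eqxx !orbT.
    rewrite !inE -?orbA (negbTE (tau_x i i6)) /= in hi.
    rewrite !inE -?orbA (negbTE (tau_x j j6)) /= in hj.
    have ti : i = k \/ i = l.
      by case/orP: hi => /eqP /tau_inj H1; [left; apply: H1 | right; apply: H1].
    have tj : j = k \/ j = l.
      by case/orP: hj => /eqP /tau_inj H1; [left; apply: H1 | right; apply: H1].
    case: ti => Hi; case: tj => Hj; subst; try by []; lia.
  - by rewrite size_map size_filter; rewrite count_map in Hcnt.
  - move=> s0 /mapP [[i j] /= Hp ->].
    have /= /andP [ij j6] := Pin _ Hp.
    have i6 : i < 6 by lia.
    rewrite mem_filter /= in Hp; case/andP: Hp => Hg _.
    split => //.
    + apply: card3; rewrite ?(eq_sym x) ?tau_x //.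
      apply/eqP => /tau_inj H1; have := H1 i6 j6; lia.
    + by rewrite !inE eqxx.
    + apply/subsetP => y; rewrite !inE => /andP [yx]; rewrite -?orbA => /or3P [] /eqP Ey.
      * by rewrite Ey eqxx in yx.
      * by rewrite Ey; apply: tauS.
      * by rewrite Ey; apply: tauS.
  exfalso; apply: nF.
  case/hasP: Hpm => [[[[[[a b] c] d] e] f]] Hm /= /and3P [gab gcd gef].
  have /allP /(_ _ Hm) /= /and5P [Pab Pcd Pef Uidx Aidx0] := pm_facts.
  have Aidx : all (fun i => i < 6) [:: a; b; e; c; d; f] := Aidx0.
  have Uidx0 : uniq [:: a; b; e; c; d; f] := Uidx.
  rewrite !g_ofE // in gab gcd gef.
  pose L := x :: map tau [:: a; b; e; c; d; f].
  pose F (k : 'I_7) := nth x L k.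
  have uL : uniq L.
    rewrite /L cons_uniq; apply/andP; split.
      apply/mapP => [[i Hi E]]; move: (tau_x i); rewrite -E eqxx.
      by move=> /(_ (allP Aidx _ Hi)).
    rewrite map_inj_in_uniq // => i j Hi Hj; apply: tau_inj.
      exact: (allP Aidx _ Hi).
    exact: (allP Aidx _ Hj).
  have injF : injective F.
    move=> i j E; apply/val_inj/eqP.
    have szL : size L = 7 by [].
    rewrite -(nth_uniq x _ _ uL) ?szL; [exact/eqP | exact: ltn_ord | exact: ltn_ord].
  have FS (k : 'I_7) : (k : nat) != 0 -> F k \in S.
    case: k => [[|k] Hk] //= _.
    change (nth x (map tau [:: a; b; e; c; d; f]) k \in S).
    have Hk6 : k < 6 by [].
    rewrite (nth_map 0); last by [].
    apply: tauS; apply: (allP Aidx); exact: mem_nth.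
  have line (i j k : 'I_7) : i != j -> i != k -> j != k -> (i : nat) != 0 -> (j : nat) != 0 ->
     (k : nat) != 0 -> [set F i; F j; F k] \in H.
    move=> ij ik jk i0 j0 k0; apply: K6.
      by apply/subsetP => y; rewrite !inE -?orbA => /or3P [] /eqP ->; apply: FS.
    by apply: card3; rewrite (inj_eq injF).
  have Hall : all (fun t : nat * nat * nat =>
      [set F (inord t.1.1); F (inord t.1.2); F (inord t.2)] \in H) fano_edges; last first.
    by exists F; split => // a' b' c' /(allP Hall).
  rewrite /fano_edges /= !andbT; repeat (apply/andP; split).
  all: try (apply: line; first [apply/eqP => /(congr1 (@nat_of_ord 7)); by rewrite !inordK | by rewrite inordK]).
  all: have FE k : k < 7 -> F (inord k) = nth x L k by move=> Hk; change (nth x L (inord k : 'I_7) = nth x L k); rewrite inordK.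
  all: by rewrite !FE.

Qed.

Theorem fact2p4 (H : {set {set 'I_8}}) :
  uniform3 H -> ~ contains_fano H -> contains_K63 H ->
  nedges H <= 46 /\ 46 < b 8 /\ b 8 = 48.
Proof.
move=> Hu nF [S [cS K6]].
split; last by [].
have cC : #|~: S| == 2.
  by have := cardsC S; rewrite card_ord cS => E; apply/eqP; lia.
case/cards2P: cC => u [v [uv Cuv]].
have uS : u \notin S by rewrite -in_setC Cuv !inE eqxx.
have vS : v \notin S by rewrite -in_setC Cuv !inE eqxx orbT.
have [su [uu szu Hsu]] := link_bound cS K6 uS nF.
have [sv [uv' szv Hsv]] := link_bound cS K6 vS nF.
pose s := su ++ sv.
have us : uniq s.
  rewrite cat_uniq uu uv' andbT /=; apply/hasP => [[e ev eu]].
  have [_ _ ue sub] := Hsu e eu.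
  have [_ _ ve _] := Hsv e ev.
  have : v \in e :\ u by rewrite !inE ve eq_sym uv.
  by move/(subsetP sub); rewrite (negbTE vS).
pose B := [set e in s].
have cB : #|B| = size s by rewrite cardsE; apply/card_uniqP.
have HB : H :&: B = set0.
  apply/setP => e; rewrite !inE; apply/negbTE; apply/andP => [[eH es]].
  have : e \in su ++ sv := es.
  by rewrite mem_cat => /orP [/Hsu | /Hsv] [_ /negP Hn _ _]; apply: Hn.
have sub : H :|: B \subset [set e : {set 'I_8} | #|e| == 3].
  apply/subsetP => e; rewrite !inE => /orP [/Hu -> //|es].
  have : e \in su ++ sv := es.
  by rewrite mem_cat => /orP [/Hsu | /Hsv] [-> _ _ _].
have := subset_leq_card sub; rewrite card_draws card_ord.
have := cardsUI H B; rewrite HB cards0 cB size_cat /nedges.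
change 'C(8, 3) with 56.
lia.
Qed.
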